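(* Let $H$ be an abelian group with an alternating $\mathbb{Z}$-bilinear form $\langle-,-\rangle\neq0$, and let $z\in\ker\mu$. Then the composition \[ Z_2(\mathbb{Q}[H^{(1)}])_{(z)}\longrightarrow C_2(\mathbb{Q}[H])_{(z)}\longrightarrow \hat C_2(\mathbb{Q}[H])_{(z)}\longrightarrow \mathbb{Q}\otimes_{\mathbb{Z}}(H/\mathbb{Z}z) \] is surjective, where the first map is induced by inclusion, the second is the quotient projection, and the third is the isomorphism induced by $[u]\wedge[v]\mapsto 1\otimes\bar u$ (for $u+v=z$).
   Context: $\mu:H\to\mathrm{Hom}_{\mathbb{Z}}(H,\mathbb{Z})$, $\mu(x)(y)=\langle x,y\rangle$; $H^{(1)}:=H\setminus\ker\mu$. $\mathbb{Q}[S]$ ($S\subset H$) is the $\mathbb{Q}$-vector space with basis symbols $[x]$, $x\in S$; $\mathbb{Q}[H]$ is a Lie algebra via $[[x],[y]]=\langle x,y\rangle[x+y]$ and $\mathbb{Q}[H^{(1)}]$ is a Lie subalgebra. Chevalley–Eilenberg chains $C_p(\mathfrak g)=\bigwedge^p_{\mathbb{Q}}\mathfrak g$ with the standard boundary. For $S\in\{H,H^{(1)}\}$, $C_2(\mathbb{Q}[S])_{(w)}$ is the span of $[u_1]\wedge[u_2]$ with $u_i\in S$, $u_1+u_2=w$, and $Z_2(\mathbb{Q}[S])_{(w)}$ its cycles. $\hat I$ is the ideal of $\bigwedge\mathbb{Q}[H]$ generated by all $[u+v]\wedge[x]-[u]\wedge[x+v]-[v]\wedge[x+u]$, $u,v,x\in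 H$; $\hat C_2(\mathbb{Q}[H])_{(z)}=C_2(\mathbb{Q}[H])_{(z)}/(\hat I\cap C_2(\mathbb{Q}[H])_{(z)})$, which is isomorphic to $\mathbb{Q}\otimes(H/\mathbb{Z}z)$ via $[u]\wedge[z-u]\mapsto 1\otimes\bar u$. *)

(* Defs.v *)
From HB Require Import structures.
From mathcomp Require Import all_boot all_order all_algebra.
Set Implicit Arguments. Unset Strict Implicit. Unset Printing Implicit Defensive.
Import Order.TTheory GRing.Theory Num.Theory.
Local Open Scope ring_scope.

Definition biadditive (H : zmodType) (form : H -> H -> int) : Prop :=
  (forall x y w, form (x + y) w = form x w + form y w) /\
  (forall x y w, form x (y + w) = form x y + form x w).

Definition alternating (H : zmodType) (form : H -> H -> int) : Prop :=
  forall x, form x x = 0.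

Definition in_ker_mu (H : zmodType) (form : H -> H -> int) (z : H) : Prop :=
  forall y, form z y = 0.

(* x \in H^(1) = H \ ker mu *)
Definition inH1 (H : zmodType) (form : H -> H -> int) (x : H) : Prop :=
  exists y, form x y != 0.

(* Elements of Q[H] (and of Q[A] for any A) are represented by formal        *)
(* finite sums  sum_i q_i [a_i], i.e. lists of (q_i, a_i).  The coefficient   *)
Definition coefQ (H : zmodType) (s : seq (rat * H)) (h : H) : rat :=
  \sum_(p <- s | p.2 == h) p.1.

(* Elements of C_2(Q[H]) = /\^2 Q[H] are represented by formal finite sums   *)
(* sum_i q_i [x_i] /\ [y_i], i.e. lists of (q_i, x_i, y_i).                   *)

(* Chevalley--Eilenberg boundary C_2 -> C_1:                                  *)
(*   d([x] /\ [y]) = - [[x],[y]] = - <x,y> [x+y].                             *)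
Definition bd2 (H : zmodType) (form : H -> H -> int)
    (c : seq (rat * H * H)) : seq (rat * H) :=
  [seq (- (p.1.1 * (form p.1.2 p.2)%:~R), p.1.2 + p.2) | p <- c].

Definition is_cycle2 (H : zmodType) (form : H -> H -> int)
    (c : seq (rat * H * H)) : Prop :=
  forall h, coefQ (bd2 form c) h = 0.

(* The chain represented by c lies in C_2(Q[H^(1)])_(z): it is a combination *)
(* of [u1] /\ [u2] with u1, u2 in H^(1) and u1 + u2 = z.                      *)
Definition in_C2_H1_weight (H : zmodType) (form : H -> H -> int) (z : H)
    (c : seq (rat * H * H)) : Prop :=
  forall p, p \in c -> [/\ inH1 form p.1.2, inH1 form p.2 & p.1.2 + p.2 = z].

(* Q (x)_Z (H / Z z): presented as the Q-vector space Q[H] modulo            *)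
(*   (i)  [a] - [a + k z]            (k : int)   -- this gives Q[H/Zz]        *)
(*   (ii) [a + b] - [a] - [b]        (a, b : H)  -- this gives Q (x)_Z (H/Zz) *)
(* An element sum_i q_i (x) abar_i is represented by the list of (q_i, a_i).  *)
Definition tensQ_eq (H : zmodType) (z : H) (s t : seq (rat * H)) : Prop :=
  exists (r1 : seq (rat * H * int)) (r2 : seq (rat * H * H)),
    forall h,
      coefQ s h - coefQ t h =
        \sum_(p <- r1) p.1.1 * ((p.1.2 == h)%:R - (p.1.2 + z *~ p.2 == h)%:R)
      + \sum_(p <- r2) p.1.1 * ((p.1.2 + p.2 == h)%:R - (p.1.2 == h)%:R
                                - (p.2 == h)%:R).

(* The composite map C_2(Q[H])_(z) -> hat C_2(Q[H])_(z) ~= Q (x) (H/Zz),     *)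
(* [u] /\ [v] |-> 1 (x) ubar (u + v = z), extended Q-linearly:               *)
Definition phi2 (H : zmodType) (c : seq (rat * H * H)) : seq (rat * H) :=
  [seq (p.1.1, p.1.2) | p <- c].

(* Main.v *)
Require Import Defs.
From HB Require Import structures.
From mathcomp Require Import all_boot all_order all_algebra.
From mathcomp Require Import ring lra.
From Stdlib Require Import Classical.
Import Order.TTheory GRing.Theory Num.Theory.
Local Open Scope ring_scope.

Set Implicit Arguments.
Section Aux.
Variables (H : zmodType) (form : H -> H -> int).
Hypothesis Hbil : biadditive form.
Hypothesis Halt : alternating form.

Lemma f0l y : form 0 y = 0.
Proof.
have := (proj1 Hbil) 0 0 y; rewrite addr0 => e.
by apply: (addrI (form 0 y)); rewrite addr0 -e.
Qed.

Lemma fNl u y : form (- u) y = - form u y.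
Proof.
have := (proj1 Hbil) u (- u) y; rewrite subrr f0l => e.
by apply/eqP; rewrite -addr_eq0 addrC -e.
Qed.

Lemma f0r y : form y 0 = 0.
Proof.
have := (proj2 Hbil) y 0 0; rewrite addr0 => e.
by apply: (addrI (form y 0)); rewrite addr0 -e.
Qed.

Lemma fNr u y : form y (- u) = - form y u.
Proof.
have := (proj2 Hbil) y u (- u); rewrite subrr f0r => e.
by apply/eqP; rewrite -addr_eq0 addrC -e.
Qed.

Lemma fanti u v : form u v = - form v u.
Proof.
have := Halt (u + v).
rewrite (proj1 Hbil) !(proj2 Hbil) !Halt add0r addr0 => e.
by apply/eqP; rewrite -addr_eq0 e.
Qed.
End Aux.

Theorem proposition3p4 (H : zmodType) (form : H -> H -> int)
    (Hbil : biadditive form) (Halt : alternating form)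
    (Hnz : exists x y, form x y != 0)
    (z : H) (Hz : in_ker_mu form z) :
  forall t : seq (rat * H),
    exists c : seq (rat * H * H),
      [/\ in_C2_H1_weight form z c, is_cycle2 form c & tensQ_eq z (phi2 c) t].
Proof.
have cyc : forall c, in_C2_H1_weight form z c -> is_cycle2 form c.
  move=> c Hc h; rewrite /coefQ /bd2 big_map big1_seq // => p /andP [_ pc].
  have [_ _ e] := Hc p pc.
  have -> : p.2 = z - p.1.2 by rewrite -e addrC addKr.
  rewrite (proj2 Hbil) (fNr Hbil) Halt (fanti Hbil Halt) Hz.
  rewrite oppr0 ?addr0 ?add0r ?mulr0 ?oppr0 ?subrr //.
have H1z : forall u, inH1 form u -> inH1 form (z - u).
  move=> u [y hy]; exists y; rewrite (proj1 Hbil) (fNl Hbil) Hz add0r oppr_eq0 //.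
have [x0 [y0 hx0]] := Hnz.
elim=> [|[q a] t [c [Hc _ [r1 [r2 IH]]]]].
  exists [::]; split => //; first by apply: cyc.
  by exists [::], [::] => h; rewrite /coefQ !big_nil; ring.
destruct (classic (inH1 form a)) as [ha|ha].
  have Hc' : in_C2_H1_weight form z ((q, a, z - a) :: c).
    move=> p; rewrite inE => /orP [/eqP -> /=|pc]; last exact: Hc.
    by split => //; [apply: H1z | rewrite addrC subrK].
  exists ((q, a, z - a) :: c); split => //; first by apply: cyc.
  exists r1, r2 => h; move: (IH h); rewrite /coefQ /phi2 /= !big_cons /=.
  by case: (a == h) => e; rewrite -e; ring.
have ka : forall y, form a y = 0.
  move=> y; case: (eqVneq (form a y) 0) => // ne; exfalso; apply: ha; by exists y.
have hax : inH1 form (a + x0).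
  by exists y0; rewrite (proj1 Hbil) ka add0r.
have hx : inH1 form x0 by exists y0.
have Hc' : in_C2_H1_weight form z ((q, a + x0, z - (a + x0)) :: (- q, x0, z - x0) :: c).
  move=> p; rewrite !inE => /orP [/eqP -> /=|/orP [/eqP -> /=|pc]]; last exact: Hc.
    by split => //; [apply: H1z | rewrite addrC subrK].
  by split => //; [apply: H1z | rewrite addrC subrK].
exists ((q, a + x0, z - (a + x0)) :: (- q, x0, z - x0) :: c); split => //; first by apply: cyc.
exists r1, ((q, a, x0) :: r2) => h; move: (IH h); rewrite /coefQ /phi2 /= !big_cons /=.
case: (a + x0 == h); case: (x0 == h); case: (a == h); rewrite /= => e; lra.
Qed.
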